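(* Let $F$ be a field and $n\ge1$ an integer. There is a universal closed formula $\varphi_n$ in the signature of unital $F$-algebras such that for every unital locally matrix algebra $A$ over $F$, $\varphi_n$ holds in $A$ if and only if $n\notin D(A)$.
   Context: All algebras are associative $F$-algebras with identity $1$. An algebra $A$ is a (unital) locally matrix algebra if every finite collection of elements of $A$ lies in a subalgebra $B$ with $1_A\in B\subseteq A$ and $B\cong M_k(F)$ for some $k\ge1$. $D(A)$ denotes the set of positive integers $n$ such that $A$ has a subalgebra $A'$ with $1_A\in A'$ and $A'\cong M_n(F)$. The signature of unital $F$-algebras consists of addition, multiplication, multiplication by each scalar of $F$, and constants $0$ and $1$. *)

(* Defs.v *)
From HB Require Import structures.
From mathcomp Require Import all_boot all_order all_algebra.
Set Implicit Arguments. Unset Strict Implicit. Unset Printing Implicit Defensive.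
Import GRing.Theory.
Local Open Scope ring_scope.

Inductive alg_term (F : Type) : Type :=
  | TVar of nat
  | TZero
  | TOne
  | TAdd of alg_term F & alg_term F
  | TMul of alg_term F & alg_term F
  | TScale of F & alg_term F.

Inductive qf_formula (F : Type) : Type :=
  | FEq of alg_term F & alg_term F
  | FTrue
  | FFalse
  | FNot of qf_formula F
  | FAnd of qf_formula F & qf_formula F
  | FOr of qf_formula F & qf_formula F.

Section Semantics.
Variables (F : fieldType) (A : algType F).

Fixpoint eval_term (e : nat -> A) (t : alg_term F) : A :=
  match t with
  | TVar i => e i
  | TZero => 0
  | TOne => 1
  | TAdd t1 t2 => eval_term e t1 + eval_term e t2
  | TMul t1 t2 => eval_term e t1 * eval_term e t2
  | TScale c t1 => c *: eval_term e t1
  end.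

Fixpoint eval_qf (e : nat -> A) (f : qf_formula F) : Prop :=
  match f with
  | FEq t1 t2 => eval_term e t1 = eval_term e t2
  | FTrue => True
  | FFalse => False
  | FNot g => ~ eval_qf e g
  | FAnd g h => eval_qf e g /\ eval_qf e h
  | FOr g h => eval_qf e g \/ eval_qf e h
  end.

(* A universal closed formula is the universal closure of a quantifier-free
   formula psi (over all of its, finitely many, free variables); it holds in A
   iff psi holds under every assignment of the variables. *)
Definition holds_universal (psi : qf_formula F) : Prop :=
  forall e : nat -> A, eval_qf e psi.

(* f : M_k(F) -> A is an injective unital F-algebra homomorphism, i.e. its
   image is a subalgebra B with 1_A in B and B isomorphic to M_k(F). *)
Definition unital_mx_embedding (k : nat) (f : 'M[F]_k.+1 -> A) : Prop :=
  [/\ injective f,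
      forall (a : F) (u v : 'M[F]_k.+1), f (a *: u + v) = a *: f u + f v,
      forall u v : 'M[F]_k.+1, f (u * v) = f u * f v
    & f 1 = 1].

Definition locally_matrix : Prop :=
  forall s : seq A, exists k (f : 'M[F]_k.+1 -> A),
    unital_mx_embedding f /\ {in s, forall x, exists u, f u = x}.

Definition in_D (n : nat) : Prop :=
  match n with
  | 0 => False
  | m.+1 => exists f : 'M[F]_m.+1 -> A, unital_mx_embedding f
  end.

End Semantics.

(* Main.v *)
Require Import Defs.
From mathcomp Require Import all_boot all_order all_algebra.
Import GRing.Theory.
Local Open Scope ring_scope.

Section Proof.
Variables (F : fieldType) (m : nat).
Local Notation N := m.+1.

Definition Ev (i j : nat) : alg_term F := TVar F (i * N + j)%N.

Definition andAll (s : seq nat) (P : nat -> qf_formula F) :=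
  foldr (fun i acc => FAnd (P i) acc) (FTrue F) s.
Arguments andAll : simpl never.
Definition sumT (s : seq nat) (P : nat -> alg_term F) :=
  foldr (fun i acc => TAdd (P i) acc) (TZero F) s.

Definition rels : qf_formula F :=
  FAnd (andAll (iota 0 N) (fun i => andAll (iota 0 N) (fun j =>
          andAll (iota 0 N) (fun k => andAll (iota 0 N) (fun l =>
            FEq (TMul (Ev i j) (Ev k l)) (if j == k then Ev i l else TZero F))))))
       (FEq (sumT (iota 0 N) (fun i => Ev i i)) (TOne F)).

Variable A : algType F.

Lemma eval_andAll (e : nat -> A) s P :
  eval_qf e (andAll s P) <-> (forall i, i \in s -> eval_qf e (P i)).
Proof.
elim: s => [|x s IH] /=; split => //.
- move=> [H1 /IH H2] i; rewrite inE => /orP[/eqP->//|]; exact: H2.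
- move=> H; split; first by apply: H; rewrite inE eqxx.
  by apply/IH => i Hi; apply: H; rewrite inE Hi orbT.
Qed.

Lemma eval_sumT (e : nat -> A) s P :
  eval_term e (sumT s P) = \sum_(i <- s) eval_term e (P i).
Proof. by elim: s => [|x s IH]; rewrite ?big_nil ?big_cons //= IH. Qed.

Lemma andAll_at {e : nat -> A} {s P i} :
  eval_qf e (andAll s P) -> i \in s -> eval_qf e (P i).
Proof. by move/eval_andAll => H /H. Qed.

Lemma eval_FAnd (e : nat -> A) p q :
  eval_qf e (FAnd p q) <-> eval_qf e p /\ eval_qf e q.
Proof. by []. Qed.

Definition MU (E : 'I_N -> 'I_N -> A) :=
  (forall i j k l, E i j * E k l = if j == k then E i l else 0)
  /\ \sum_i E i i = 1.

Lemma MU_ext E E' : (forall i j, E i j = E' i j) -> MU E -> MU E'.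
Proof.
move=> h [h1 h2]; split; first by move=> i j k l; rewrite -!h h1.
by rewrite -h2; apply: eq_bigr => i _; rewrite h.
Qed.

Lemma iota_ord (G : nat -> A) : \sum_(i <- iota 0 N) G i = \sum_(i < N) G i.
Proof. by rewrite -(big_mkord xpredT) /index_iota subn0. Qed.

Lemma eval_rels (e : nat -> A) :
  eval_qf e rels <-> MU (fun i j => e (i * N + j)%N).
Proof.
apply: iff_trans (eval_FAnd _ _ _) _; split.
- move=> [H1 H2]; split.
  + move=> i j k l.
    have mi : forall x : 'I_N, (val x \in iota 0 N) by move=> x; rewrite mem_iota ltn_ord.
    move: (andAll_at (andAll_at (andAll_at (andAll_at H1 (mi i)) (mi j)) (mi k)) (mi l)) => /=.
    by rewrite val_eqE; case: (j == k).
  + have H3 : eval_term e (sumT (iota 0 N) (fun i => Ev i i)) = 1 := H2.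
    by move: H3; rewrite eval_sumT iota_ord.
- move=> [H1 H2]; split.
  + apply: (proj2 (eval_andAll _ _ _)) => i; rewrite mem_iota add0n => /andP[_ Hi].
    apply: (proj2 (eval_andAll _ _ _)) => j; rewrite mem_iota add0n => /andP[_ Hj].
    apply: (proj2 (eval_andAll _ _ _)) => k; rewrite mem_iota add0n => /andP[_ Hk].
    apply: (proj2 (eval_andAll _ _ _)) => l; rewrite mem_iota add0n => /andP[_ Hl].
    have := H1 (Ordinal Hi) (Ordinal Hj) (Ordinal Hk) (Ordinal Hl).
    rewrite -val_eqE /= => h.
    change (e (i*N+j)%N * e (k*N+l)%N = eval_term e (if j == k then Ev i l else TZero F)).
    by rewrite h; case: (j == k).
  + change (eval_term e (sumT (iota 0 N) (fun i => Ev i i)) = 1).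
    by rewrite eval_sumT iota_ord.
Qed.

Section Emb.
Variable E : 'I_N -> 'I_N -> A.
Hypothesis HE : MU E.

Definition fE (u : 'M[F]_N) : A := \sum_a \sum_b u a b *: E a b.

Lemma L1 k i (u : 'M[F]_N) : E k i * fE u = \sum_b u i b *: E k b.
Proof.
rewrite /fE mulr_sumr (bigD1 i) //= [X in _ + X]big1 ?addr0.
  rewrite mulr_sumr; apply: eq_bigr => b _.
  by rewrite -scalerAr (proj1 HE) eqxx.
move=> a /negbTE ne; rewrite mulr_sumr big1 // => b _.
by rewrite -scalerAr (proj1 HE) eq_sym ne scaler0.
Qed.

Lemma L2 k i j l (u : 'M[F]_N) : (\sum_b u i b *: E k b) * E j l = u i j *: E k l.
Proof.
rewrite mulr_suml (bigD1 j) //= [X in _ + X]big1 ?addr0.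
  by rewrite -scalerAl (proj1 HE) eqxx.
move=> b /negbTE ne.
by rewrite -scalerAl (proj1 HE) ne scaler0.
Qed.

Lemma fE_lin a u v : fE (a *: u + v) = a *: fE u + fE v.
Proof.
rewrite /fE scaler_sumr -big_split; apply: eq_bigr => i _.
rewrite scaler_sumr -big_split; apply: eq_bigr => j _.
by rewrite !mxE scalerDl scalerA.
Qed.

Lemma fE_mul u v : fE (u * v) = fE u * fE v.
Proof.
rewrite {2}/fE mulr_suml; apply: eq_bigr => a _.
rewrite mulr_suml.
under [RHS]eq_bigr => b _ do rewrite -scalerAl L1 scaler_sumr.
rewrite exchange_big /=; apply: eq_bigr => c _.
rewrite -mulmxE mxE scaler_suml; apply: eq_bigr => b _.
by rewrite scalerA.
Qed.

Lemma fE_1 : fE 1 = 1.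
Proof.
rewrite -(proj2 HE) /fE; apply: eq_bigr => i _.
rewrite (bigD1 i) //= [X in _ + X]big1 ?addr0.
  by rewrite mxE eqxx scale1r.
by move=> j /negbTE ne; rewrite mxE eq_sym ne scale0r.
Qed.

Lemma fE_coef (u : 'M[F]_N) i j : u i j *: (1 : A) = \sum_k E k i * fE u * E j k.
Proof.
rewrite -(proj2 HE) scaler_sumr; apply: eq_bigr => k _.
by rewrite L1 L2.
Qed.

Hypothesis A1 : (1 : A) != 0.

Lemma fE_inj : injective fE.
Proof.
move=> u v h; apply/matrixP => i j.
have := fE_coef u i j; rewrite h -fE_coef => /eqP.
rewrite -subr_eq0 -scalerBl scaler_eq0 (negbTE A1) orbF subr_eq0.
by move/eqP.
Qed.

Lemma fE_emb : unital_mx_embedding fE.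
Proof. split; [exact: fE_inj | exact: fE_lin | exact: fE_mul | exact: fE_1]. Qed.
End Emb.

Lemma emb0 {f : 'M[F]_N -> A} : unital_mx_embedding f -> f 0 = 0.
Proof.
case=> _ lin _ _; have := lin (-1) 0 0.
by rewrite scaler0 addr0 scaleN1r addNr.
Qed.

Lemma in_D_MU : (1 : A) != 0 ->
  (in_D A N <-> exists E, MU E).
Proof.
move=> A1; split.
- move=> [f hf]; exists (fun i j => f (delta_mx i j)).
  have f0 := emb0 hf.
  case: hf => _ lin mul f1.
  have fD : forall u v, f (u + v) = f u + f v.
    by move=> u v; rewrite -[u in LHS]scale1r lin scale1r.
  split.
  + move=> i j k l; rewrite -mul -mulmxE mul_delta_mx_cond.
    by case: (j == k); rewrite ?mulr1n ?mulr0n.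
  + rewrite -(big_morph f fD f0) -f1; congr f.
    rewrite [RHS]matrix_sum_delta; apply: eq_bigr => i _.
    rewrite (bigD1 i) //= [X in _ + X]big1 ?addr0.
      by rewrite mxE eqxx scale1r.
    by move=> j /negbTE ne; rewrite mxE eq_sym ne scale0r.
- move=> [E HE]; exists (fE E); exact: fE_emb.
Qed.

End Proof.

Theorem lemma1 (F : fieldType) (n : nat) (hn : (1 <= n)%N) :
  exists phi : qf_formula F,
    forall A : algType F,
      locally_matrix A -> (holds_universal A phi <-> ~ in_D A n).
Proof.
case: n hn => // m _.
exists (FNot (rels F m)) => A lm.
have A1 : (1 : A) != 0.
  have [k [f [hf _]]] := lm [::].
  have f0 := @emb0 F k A f hf.
  case: hf => inj _ _ f1.
  apply/eqP => h10; have : f 1 = f 0 by rewrite f1 f0.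
  by move/inj/eqP; rewrite oner_eq0.
have [iD1 iD2] := @in_D_MU F m A A1; split.
- move=> H /iD1 [E HE].
  pose e (x : nat) := E (inord (x %/ m.+1)) (inord (x %% m.+1)).
  apply: (H e); apply/(@eval_rels F m A).
  apply: MU_ext HE => i j.
  rewrite /e divnMDl // modnMDl divn_small // modn_small // addn0.
  by rewrite !inord_val.
- move=> H e /= /(@eval_rels F m A) HE; apply: H; apply: iD2; by exists (fun i j => e (i * m.+1 + j)%N).
Qed.
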